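(* Let $M$ be an abelian group of odd order with exponent greater than $2$. Then $\mathrm{Aut}(L_M)\cong S_3\times\mathrm{Aut}(M)$ and $\mathrm{Half}(L_M)\cong C_2\times S_3\times\mathrm{Aut}(M)$.
   Context: Let $K=\{1,a,b,c\}$ be the Klein four-group. Set $L_M=K\times M$ with the operation $(A,x)*(B,y)=(AB,xy)$ if $B=1$, and $(A,x)*(B,y)=(AB,x^{-1}y)$ if $B\neq 1$. $\mathrm{Half}(L_M)$ denotes the group of half-automorphisms of $L_M$, i.e. bijections $f$ with $f(XY)\in\{f(X)f(Y),f(Y)f(X)\}$ for all $X,Y$. $S_3$ is the symmetric group on three letters and $C_2$ the cyclic group of order $2$. *)

(* Defs.v *)
From HB Require Import structures.
From mathcomp Require Import all_boot all_algebra all_fingroup all_solvable.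
Set Implicit Arguments. Unset Strict Implicit. Unset Printing Implicit Defensive.

Local Open Scope group_scope.

Definition Klein : finGroupType := ('Z_2 * 'Z_2)%type.

Definition LM_mul (gT : finGroupType) (X Y : Klein * gT) : Klein * gT :=
  let: (A, x) := X in let: (B, y) := Y in
  if B == 1 then (A * B, x * y) else (A * B, x^-1 * y).

Definition LM_Aut (gT : finGroupType) : {set {perm (Klein * gT)}} :=
  [set f : {perm (Klein * gT)} |
     [forall X, forall Y, f (LM_mul X Y) == LM_mul (f X) (f Y)]].

Definition LM_Half (gT : finGroupType) : {set {perm (Klein * gT)}} :=
  [set f : {perm (Klein * gT)} |
     [forall X, forall Y, (f (LM_mul X Y) == LM_mul (f X) (f Y))
                       || (f (LM_mul X Y) == LM_mul (f Y) (f X))]].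

(* Main.v *)
Require Import Defs.
From mathcomp Require Import all_boot all_algebra all_fingroup all_solvable.
Set Implicit Arguments. Unset Strict Implicit. Unset Printing Implicit Defensive.
Local Open Scope group_scope.

Definition kl (i : 'I_3) : Klein :=
  if val i == 0%N then (Zp1, 1) else if val i == 1%N then (1, Zp1) else (Zp1, Zp1).
Definition kinv (A : Klein) : 'I_3 :=
  if A == kl (@Ordinal 3 0 isT) then @Ordinal 3 0 isT else if A == kl (@Ordinal 3 1 isT) then @Ordinal 3 1 isT else @Ordinal 3 2 isT.

Lemma z2_cases (z : 'Z_2) : z = 1 \/ z = Zp1.
Proof. case: z => [[|[|n]] H]; [left|right|by []]; exact: val_inj. Qed.

Lemma klein_cases (A : Klein) :
  [\/ A = (1,1), A = (Zp1,1), A = (1,Zp1) | A = (Zp1,Zp1)].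
Proof. case: A => a b; by case: (z2_cases a) => ->; case: (z2_cases b) => ->;
  [apply Or41|apply Or43|apply Or42|apply Or44]. Qed.

Lemma i3_cases (i : 'I_3) : [\/ i = @Ordinal 3 0 isT, i = @Ordinal 3 1 isT | i = @Ordinal 3 2 isT].
Proof. case: i => [[|[|[|n]]] H]; [apply Or31|apply Or32|apply Or33|by []];
  by apply: val_inj. Qed.

Lemma klein_sq (A : Klein) : A * A = 1.
Proof. apply/eqP; by case: (klein_cases A) => ->. Qed.
Lemma klein_comm (A B : Klein) : A * B = B * A.
Proof. apply/eqP; by case: (klein_cases A) => ->; case: (klein_cases B) => ->. Qed.
Lemma kl_neq1 i : kl i != 1.
Proof. by case: (i3_cases i) => ->. Qed.
Lemma klK i : kinv (kl i) = i.
Proof. apply/eqP; by case: (i3_cases i) => ->. Qed.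
Lemma kinvK A : A != 1 -> kl (kinv A) = A.
Proof. move=> h; apply/eqP; move: h; by case: (klein_cases A) => ->. Qed.
Lemma klein_third (x y z : Klein) : x != 1 -> y != 1 -> x != y -> z != 1 -> z != x -> z != y ->
  z = x * y.
Proof. move=> h1 h2 h3 h4 h5 h6; apply/eqP; move: h1 h2 h3 h4 h5 h6. by case: (klein_cases x) => ->; case: (klein_cases y) => ->; case: (klein_cases z) => ->. Qed.
Lemma klein_pair (C : Klein) : C != 1 -> exists A B : Klein, [/\ A != 1, B != 1, A != B & A * B = C].
Proof.
case: (klein_cases C) => -> // _.
- by exists (1,Zp1), (Zp1,Zp1); split => //; apply/eqP.
- by exists (Zp1,1), (Zp1,Zp1); split => //; apply/eqP.
- by exists (Zp1,1), (1,Zp1); split => //; apply/eqP.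
Qed.

Section Grp.
Variable gT : finGroupType.
Hypothesis Hab : abelian [set: gT].
Hypothesis Hodd : odd #|[set: gT]|.
Hypothesis Hexp : 2 < exponent [set: gT].

Lemma mC (x y : gT) : x * y = y * x.
Proof. exact: (centsP Hab x (in_setT x) y (in_setT y)). Qed.

Lemma mCA (x y z : gT) : x * (y * z) = y * (x * z).
Proof. by rewrite mulgA (mC x y) -mulgA. Qed.

Lemma iM (x y : gT) : (x * y)^-1 = x^-1 * y^-1.
Proof. by rewrite invMg mC. Qed.

Lemma sq1 (x : gT) : x * x = 1 -> x = 1.
Proof.
move=> H; apply/eqP; rewrite -order_eq1 -dvdn1.
have h2 : (#[x] %| 2)%N by rewrite order_dvdn expgS expg1 H.
have hG : (#[x] %| #|[set: gT]|)%N by apply: order_dvdG; rewrite in_setT.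
have : (#[x] %| gcdn 2 #|[set: gT]|)%N by rewrite dvdn_gcd h2 hG.
by move: (Hodd); rewrite -coprime2n => /eqP ->.
Qed.

Lemma inv_self (x : gT) : x^-1 = x -> x = 1.
Proof. by move=> H; apply: sq1; rewrite -{1}H mulVg. Qed.

Lemma sqrt_ex (x : gT) : exists y, y * y = x.
Proof.
exists (x ^+ (#|[set: gT]|.+1)./2).
rewrite -expgnDr addnn halfK /=; rewrite Hodd subn0 expgS.
by rewrite expg_cardG ?in_setT // mulg1.
Qed.

Lemma nontriv : exists m : gT, m != 1.
Proof.
case: (pickP (fun m : gT => m != 1)) => [m Hm|H]; first by exists m.
have : ([set: gT] :==: 1).
  apply/eqP/trivgP/subsetP => x _; rewrite inE; apply/negPn; by rewrite H.
rewrite (trivg_exponent [set: gT]%G) dvdn1 => /eqP E.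
by move: Hexp; rewrite E.
Qed.

End Grp.

Lemma LM_mulE (gT : finGroupType) (A B : Klein) (x y : gT) :
  LM_mul (A, x) (B, y) = if B == 1 then (A * B, x * y) else (A * B, x^-1 * y).
Proof. by []. Qed.

Section Char.
Variable gT : finGroupType.
Hypothesis Hab : abelian [set: gT].
Hypothesis Hodd : odd #|[set: gT]|.
Hypothesis Hexp : 2 < exponent [set: gT].
Variable f : {perm (Klein * gT)}.
Hypothesis Hf : forall X Y, f (LM_mul X Y) = LM_mul (f X) (f Y) \/
                            f (LM_mul X Y) = LM_mul (f Y) (f X).

Definition al (x : gT) := (f (1, x)).2.
Definition sg (A : Klein) := (f (A, 1)).1.
Definition hh (A : Klein) (x : gT) := (f (A, x)).2.

Lemma fst_mul (X Y : Klein * gT) : (LM_mul X Y).1 = X.1 * Y.1.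
Proof. by case: X => A x; case: Y => B y; rewrite LM_mulE; case: ifP. Qed.

Lemma L_fst1 x : (f (1, x)).1 = 1.
Proof.
have [y <-] := sqrt_ex Hodd x.
have -> : ((1 : Klein), y * y) = LM_mul (1, y) (1, y) by rewrite LM_mulE eqxx mulg1.
by case: (Hf (1,y) (1,y)) => ->; rewrite fst_mul klein_sq.
Qed.

Lemma L_f1 x : f (1, x) = (1, al x).
Proof. by rewrite [LHS]surjective_pairing L_fst1. Qed.

Lemma al_M x y : al (x * y) = al x * al y.
Proof.
rewrite {1}/al.
have -> : ((1 : Klein), x * y) = LM_mul (1, x) (1, y) by rewrite LM_mulE eqxx mulg1.
case: (Hf (1,x) (1,y)) => ->; rewrite !L_f1 LM_mulE eqxx //=.
exact: (mC Hab).
Qed.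

Lemma al_inj : injective al.
Proof.
move=> x y H; have : f (1, x) = f (1, y) by rewrite !L_f1 H.
by move/perm_inj => [].
Qed.

Lemma al_1 : al 1 = 1.
Proof. by apply: (mulgI (al 1)); rewrite -al_M !mulg1. Qed.

Lemma al_V x : al x^-1 = (al x)^-1.
Proof. by apply: (mulIg (al x)); rewrite -al_M !mulVg al_1. Qed.

Lemma al_surj z : exists w, al w = z.
Proof. by exists ((perm al_inj)^-1 z); have := permKV (perm al_inj) z; rewrite permE. Qed.

Lemma L_fst A x : (f (A, x)).1 = sg A.
Proof.
have -> : (A, x) = LM_mul (A, 1) (1, x) by rewrite LM_mulE eqxx mulg1 mul1g.
case: (Hf (A,1) (1,x)) => ->; rewrite fst_mul L_f1 /= ?mulg1 ?mul1g //.
Qed.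

Lemma L_fp A x : f (A, x) = (sg A, hh A x).
Proof. by rewrite [LHS]surjective_pairing L_fst. Qed.

Lemma sg_M A B : sg (A * B) = sg A * sg B.
Proof.
rewrite {1}/sg.
have -> : (A * B, 1) = LM_mul (A, 1) (B, 1) :> Klein * gT
  by rewrite LM_mulE; case: ifP; rewrite ?mulg1 ?invg1.
case: (Hf (A,1) (B,1)) => ->; rewrite fst_mul // klein_comm //.
Qed.

Lemma sg_1 : sg 1 = 1.
Proof. exact: L_fst1. Qed.

Lemma sg_eq1 A : sg A = 1 -> A = 1.
Proof.
move=> H; have [w Hw] := al_surj (hh A 1).
have : f (A, 1) = f (1, w) by rewrite L_fp L_f1 H Hw.
by move/perm_inj => [].
Qed.

Lemma klein_inv (A : Klein) : A^-1 = A.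
Proof. by apply/eqP; rewrite eq_invg_mul klein_sq. Qed.

Lemma sg_inj : injective sg.
Proof.
move=> A B H.
have : sg (A * B) = 1 by rewrite sg_M H klein_sq.
move/sg_eq1/eqP; rewrite -eq_invg_mul klein_inv => /eqP //.
Qed.

Lemma sg_neq1 A : A != 1 -> sg A != 1.
Proof. by apply: contra => /eqP /sg_eq1 ->. Qed.

Lemma L_R1 A x : A != 1 -> hh A x = hh A 1 * al x \/ hh A x = (al x)^-1 * hh A 1.
Proof.
move=> HA.
have -> : hh A x = (f (LM_mul (A, 1) (1, x))).2 by rewrite LM_mulE eqxx mulg1 mul1g.
case: (Hf (A,1) (1,x)) => ->; rewrite L_f1 L_fp LM_mulE.
  by rewrite eqxx /=; left.
case: ifP => /= [/eqP E|_]; last by right.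
by move: (sg_neq1 HA); rewrite E eqxx.
Qed.

Lemma L_R2 A x y : A != 1 ->
  al (x^-1 * y) = (hh A x)^-1 * hh A y \/ al (x^-1 * y) = (hh A y)^-1 * hh A x.
Proof.
move=> HA.
have E : LM_mul (A, x) (A, y) = (1, x^-1 * y) by rewrite LM_mulE (negbTE HA) klein_sq.
have := Hf (A, x) (A, y); rewrite E L_f1 !L_fp !LM_mulE (negbTE (sg_neq1 HA)).
by case => /(congr1 snd) /= ->; [left|right].
Qed.

Lemma L_sign A : A != 1 ->
  (forall x, hh A x = hh A 1 * al x) \/ (forall x, hh A x = (al x)^-1 * hh A 1).
Proof.
move=> HA.
case: (pickP (fun x => hh A x != hh A 1 * al x)) => [x0 Hx0|Hall]; last first.
  by left => x; apply/eqP; move/negbFE: (Hall x).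
right.
have H0 : hh A x0 = (al x0)^-1 * hh A 1.
  by case: (L_R1 x0 HA) => // E; rewrite E eqxx in Hx0.
move=> y; case: (L_R1 y HA) => // Hy.
have Ea : al (x0^-1 * y) = (al x0)^-1 * al y by rewrite al_M al_V.
set u := al x0 in H0 Hx0 Ea *; set v := al y in Hy Ea *; set t := hh A 1 in H0 Hx0 Hy *.
case: (L_R2 x0 y HA); rewrite Ea H0 Hy => E.
- have : u^-1 = u.
    apply: (mulIg v); rewrite E invMg invgK -mulgA (mCA Hab u t v) mulKg //.
  move/(inv_self Hodd) => u1.
  move: Hx0; rewrite H0 u1 mulg1. rewrite [1^-1]invg1 mul1g eqxx //.
- have : v^-1 = v.
    apply: (mulgI u^-1); rewrite E (iM Hab t v) -mulgA (mulgA v^-1) (mC Hab _ t) mulKg mC //.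
  by move=> Ev; rewrite -{1}Ev mC.
Qed.

Lemma L_t1 C : C != 1 -> hh C 1 = 1.
Proof.
move=> HC; have [A [B [HA HB HAB HABC]]] := klein_pair HC.
have [m Hm] := nontriv Hexp.
set w := al m.
have Hw : w != 1 by apply: contra Hm => /eqP E; apply/eqP; apply: al_inj; rewrite al_1.
have E1 : LM_mul (A, 1) (B, m) = (C, m) by rewrite LM_mulE (negbTE HB) invg1 mul1g HABC.
have E2 : LM_mul (B, m) (A, 1) = (C, m^-1) by rewrite LM_mulE (negbTE HA) mulg1 klein_comm HABC.
set D := (hh A 1)^-1 * hh B m.
have ED : (hh B m)^-1 * hh A 1 = D^-1 by rewrite /D invMg invgK.
have H1 : hh C m = D \/ hh C m = D^-1.
  have := Hf (A, 1) (B, m); rewrite E1 !L_fp !LM_mulE (negbTE (sg_neq1 HB)) (negbTE (sg_neq1 HA)).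
  by case => /(congr1 snd) /= ->; [left|right].
have H2 : hh C m^-1 = D \/ hh C m^-1 = D^-1.
  have := Hf (B, m) (A, 1); rewrite E2 !L_fp !LM_mulE (negbTE (sg_neq1 HB)) (negbTE (sg_neq1 HA)).
  by case => /(congr1 snd) /= ->; [right|left].
set t := hh C 1.
have Hprod : hh C m * hh C m^-1 = t * t.
  case: (L_sign HC) => E; rewrite (E m) (E m^-1) al_V -/w -/t.
    by rewrite -mulgA (mCA Hab w) mulgV mulg1.
  by rewrite invgK -mulgA (mCA Hab t) mulgA mulVg mul1g.
have Hneq : hh C m != hh C m^-1.
  apply/eqP; case: (L_sign HC) => E; rewrite (E m) (E m^-1) al_V -/w -/t.
    by move=> /mulgI /esym /(inv_self Hodd) /eqP; rewrite (negbTE Hw).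
  by rewrite invgK => /mulIg /(inv_self Hodd) /eqP; rewrite (negbTE Hw).
apply: sq1 => //; rewrite -Hprod.
case: H1 => E; case: H2 => E'; rewrite ?E ?E' ?mulgV ?mulVg //.
- by move: Hneq; rewrite E E' eqxx.
- by move: Hneq; rewrite E E' eqxx.
Qed.

Lemma L_sign2 A : A != 1 ->
  (forall x, hh A x = al x) \/ (forall x, hh A x = (al x)^-1).
Proof.
move=> HA; case: (L_sign HA); rewrite (L_t1 HA) => H; [left|right] => x;
  by rewrite H ?mul1g ?mulg1.
Qed.

Lemma L_unif A B : A != 1 -> B != 1 -> A != B ->
  (forall x, hh A x = al x) -> (forall x, hh B x = (al x)^-1) -> False.
Proof.
move=> HA HB HAB EA EB.
have [m Hm] := nontriv Hexp.
have Hw : al m != 1 by apply: contra Hm => /eqP E; apply/eqP; apply: al_inj; rewrite al_1.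
have HC : A * B != 1.
  by apply: contra HAB; rewrite -eq_invg_mul klein_inv.
have E1 : LM_mul (A, m) (B, m) = (A * B, 1) by rewrite LM_mulE (negbTE HB) mulVg.
have := Hf (A, m) (B, m); rewrite E1 !L_fp !LM_mulE (negbTE (sg_neq1 HB)) (negbTE (sg_neq1 HA)).
rewrite (L_t1 HC) EA EB; case => /(congr1 snd) /= E.
- apply: (negP Hw); apply/eqP; apply: (sq1 Hodd); apply: invg_inj.
  by rewrite (iM Hab) -E invg1.
- apply: (negP Hw); apply/eqP; apply: (sq1 Hodd).
  by rewrite E invgK.
Qed.

Lemma L_final :
  (forall A x, A != 1 -> hh A x = al x) \/ (forall A x, A != 1 -> hh A x = (al x)^-1).
Proof.
have Ha : kl ord0 != 1 := kl_neq1 ord0.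
case: (L_sign2 Ha) => Sa; [left|right] => A x HA;
  case: (eqVneq A (kl ord0)) => [->|HAa]; rewrite ?Sa //;
  case: (L_sign2 HA) => SA; rewrite ?SA //; exfalso.
- exact: (L_unif Ha HA (negbT (introF eqP (fun e => negP HAa (introT eqP (esym e))))) Sa SA).
- exact: (L_unif HA Ha HAa SA Sa).
Qed.

End Char.

Definition kap (pi : {perm 'I_3}) (A : Klein) : Klein :=
  if A == 1 then 1 else kl (pi (kinv A)).

Lemma kl_inj : injective kl.
Proof. by move=> i j E; rewrite -(klK i) E klK. Qed.

Lemma kap_inj pi : injective (kap pi).
Proof.
move=> A B; rewrite /kap.
case: (eqVneq A 1) => HA; case: (eqVneq B 1) => HB.
- by rewrite HA HB.
- by move=> E; move: (kl_neq1 (pi (kinv B))); rewrite -E eqxx.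
- by move=> E; move: (kl_neq1 (pi (kinv A))); rewrite E eqxx.
- by move/kl_inj/perm_inj => E; rewrite -(kinvK HA) E kinvK.
Qed.

Lemma kap_eq1 pi A : (kap pi A == 1) = (A == 1).
Proof. rewrite /kap; case: (eqVneq A 1) => HA; by rewrite ?eqxx ?(negbTE (kl_neq1 _)). Qed.

Lemma kap1 pi : kap pi 1 = 1.
Proof. by rewrite /kap eqxx. Qed.

Lemma kap_mul p q A : kap (p * q) A = kap q (kap p A).
Proof.
rewrite /kap; case: (eqVneq A 1) => HA; first by rewrite eqxx.
by rewrite (negbTE (kl_neq1 _)) klK permM.
Qed.

Lemma klein_hom (g : Klein -> Klein) : injective g -> g 1 = 1 ->
  forall A B, g (A * B) = g A * g B.
Proof.
move=> gi g1 A B.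
case: (eqVneq A 1) => [->|HA]; first by rewrite g1 !mul1g.
case: (eqVneq B 1) => [->|HB]; first by rewrite g1 !mulg1.
case: (eqVneq A B) => [<-|HAB]; first by rewrite !klein_sq.
have gn1 : forall C, C != 1 -> g C != 1.
  by move=> C; apply: contra => /eqP E; apply/eqP; apply: gi; rewrite E g1.
have HC : A * B != 1 by apply: contra HAB; rewrite -eq_invg_mul klein_inv.
apply: klein_third; rewrite ?gn1 //.
- by apply: contra HAB => /eqP /gi ->.
- apply: contra HB => /eqP /gi E. by rewrite -(mulgI A (B) 1) ?E ?mulg1.
- apply: contra HA => /eqP /gi E. by rewrite -(mulIg B A 1) ?E ?mul1g.
Qed.

Lemma kapM pi A B : kap pi (A * B) = kap pi A * kap pi B.
Proof. exact: (@klein_hom (kap pi) (@kap_inj pi) (kap1 pi) A B). Qed.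

Section PhiSec.
Variable gT : finGroupType.

Definition Phi_fun (p : {perm 'I_3} * {perm gT}) (X : Klein * gT) :=
  (kap p.1 X.1, p.2 X.2).

Lemma Phi_inj p : injective (Phi_fun p).
Proof.
move=> [A x] [B y]; rewrite /Phi_fun /= => [[/kap_inj -> /perm_inj ->]] //.
Qed.

Definition Phi p : {perm (Klein * gT)} := perm (@Phi_inj p).

Lemma PhiE p A x : Phi p (A, x) = (kap p.1 A, p.2 x).
Proof. by rewrite permE. Qed.

Lemma Phi_morph p q : Phi (p * q) = Phi p * Phi q.
Proof. apply/permP => [[A x]]; by rewrite permM !PhiE /= kap_mul permM. Qed.

Definition tau_fun (X : Klein * gT) : Klein * gT :=
  (X.1, if X.1 == 1 then X.2 else X.2^-1).

Lemma tau_invol : involutive tau_fun.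
Proof. by move=> [A x]; rewrite /tau_fun /=; case: ifP => /= ->; rewrite ?invgK. Qed.

Definition tau : {perm (Klein * gT)} := perm (inv_inj tau_invol).

Lemma tauE A x : tau (A, x) = (A, if A == 1 then x else x^-1).
Proof. by rewrite permE. Qed.

Lemma tau2 : tau * tau = 1.
Proof. apply/permP => X; by rewrite permM perm1 !permE tau_invol. Qed.

Lemma aut_M (a : {perm gT}) x y : a \in Aut [set: gT] -> a (x * y) = a x * a y.
Proof. by move/Aut_morphic/morphicP; apply; rewrite in_setT. Qed.

Lemma aut_1 (a : {perm gT}) : a \in Aut [set: gT] -> a 1 = 1.
Proof. by move=> Ha; apply: (mulgI (a 1)); rewrite -aut_M // !mulg1. Qed.

Lemma aut_V (a : {perm gT}) x : a \in Aut [set: gT] -> a x^-1 = (a x)^-1.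
Proof. by move=> Ha; apply: (mulIg (a x)); rewrite -aut_M // !mulVg aut_1. Qed.

Lemma tauPhi p : p.2 \in Aut [set: gT] -> Phi p * tau = tau * Phi p.
Proof.
move=> Hp; apply/permP => [[A x]]; rewrite !permM tauE !PhiE tauE kap_eq1.
by case: ifP; rewrite ?aut_V.
Qed.

Lemma autP (f : {perm (Klein * gT)}) : f \in LM_Aut gT ->
  forall X Y, f (LM_mul X Y) = LM_mul (f X) (f Y).
Proof. by rewrite inE => /forallP H X Y; move/forallP: (H X) => /(_ Y) /eqP. Qed.

Lemma autI (f : {perm (Klein * gT)}) :
  (forall X Y, f (LM_mul X Y) = LM_mul (f X) (f Y)) -> f \in LM_Aut gT.
Proof. by move=> H; rewrite inE; apply/forallP => X; apply/forallP => Y; rewrite H. Qed.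

Lemma halfP (f : {perm (Klein * gT)}) : f \in LM_Half gT ->
  forall X Y, f (LM_mul X Y) = LM_mul (f X) (f Y) \/ f (LM_mul X Y) = LM_mul (f Y) (f X).
Proof.
rewrite inE => /forallP H X Y; move/forallP: (H X) => /(_ Y) /orP.
by case => /eqP; [left|right].
Qed.

Lemma halfI (f : {perm (Klein * gT)}) :
  (forall X Y, f (LM_mul X Y) = LM_mul (f X) (f Y) \/ f (LM_mul X Y) = LM_mul (f Y) (f X)) ->
  f \in LM_Half gT.
Proof.
move=> H; rewrite inE; apply/forallP => X; apply/forallP => Y.
by case: (H X Y) => ->; rewrite eqxx ?orbT.
Qed.

Lemma aut_half f : f \in LM_Aut gT -> f \in LM_Half gT.
Proof. by move/autP => H; apply: halfI => X Y; left. Qed.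

Lemma half_mul f g : f \in LM_Half gT -> g \in LM_Half gT -> f * g \in LM_Half gT.
Proof.
move=> /halfP Hf /halfP Hg; apply: halfI => X Y; rewrite !permM.
by case: (Hf X Y) => ->; [case: (Hg (f X) (f Y)) | case: (Hg (f Y) (f X))] => ->; [left|right|right|left].
Qed.

Lemma Phi_aut p : p.2 \in Aut [set: gT] -> Phi p \in LM_Aut gT.
Proof.
move=> Hp; apply: autI => [[A x] [B y]].
rewrite !PhiE !LM_mulE kap_eq1; case: ifP => _; by rewrite PhiE /= kapM ?aut_M ?aut_V.
Qed.

Lemma Phi_injective p q : Phi p = Phi q -> p = q.
Proof.
case: p => p1 p2; case: q => q1 q2 E.
have E2 : p2 = q2.
  apply/permP => x; have := congr1 (fun g : {perm _} => (g (1, x)).2) E.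
  by rewrite /= !PhiE.
have E1 : p1 = q1.
  apply/permP => i; have := congr1 (fun g : {perm _} => (g (kl i, 1)).1) E.
  rewrite /= !PhiE /= /kap (negbTE (kl_neq1 i)) klK; exact: kl_inj.
by rewrite E1 E2.
Qed.

End PhiSec.

Definition pi_fun (s : Klein -> Klein) (i : 'I_3) : 'I_3 := kinv (s (kl i)).

Lemma pi_inj (s : Klein -> Klein) : injective s -> s 1 = 1 -> injective (pi_fun s).
Proof.
move=> si s1 i j; rewrite /pi_fun => E.
have n1 : forall k, s (kl k) != 1.
  by move=> k; apply/eqP => E'; move: (kl_neq1 k); rewrite -(si _ _ (etrans E' (esym s1))) eqxx.
by apply: kl_inj; apply: si; rewrite -(kinvK (n1 i)) E kinvK.
Qed.

Lemma kap_pi (s : Klein -> Klein) (si : injective s) (s1 : s 1 = 1) A :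
  kap (perm (pi_inj si s1)) A = s A.
Proof.
rewrite /kap; case: (eqVneq A 1) => [->|HA]; first by rewrite s1.
rewrite permE /pi_fun kinvK ?kinvK //.
by apply/eqP => E'; move: HA; rewrite -(si _ _ (etrans E' (esym s1))) eqxx.
Qed.

Section Main.
Variable gT : finGroupType.
Hypothesis Hab : abelian [set: gT].
Hypothesis Hodd : odd #|[set: gT]|.
Hypothesis Hexp : 2 < exponent [set: gT].

Lemma Char_main (f : {perm (Klein * gT)}) : f \in LM_Half gT ->
  exists p : {perm 'I_3} * {perm gT}, p.2 \in Aut [set: gT] /\ (f = Phi p \/ f = Phi p * tau gT).
Proof.
move=> /halfP Hf.
pose a := perm (al_inj Hodd Hf).
have Ha : a \in Aut [set: gT].
  rewrite inE; apply/andP; split.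
    by apply/subsetP => x _; rewrite in_setT.
  by apply/morphicP => x y _ _; rewrite !permE al_M.
exists (perm (pi_inj (sg_inj Hodd Hf) (sg_1 Hodd Hf)), a); split => //.
case: (L_final Hab Hodd Hexp Hf) => E; [left|right]; apply/permP => [[A x]].
- rewrite PhiE /= kap_pi permE L_fp //.
  by case: (eqVneq A 1) => [->|HA]; [|rewrite E].
- rewrite permM PhiE /= kap_pi tauE permE L_fp //.
  case: (eqVneq A 1) => [->|HA]; first by rewrite sg_1 ?eqxx.
  by rewrite (negbTE (sg_neq1 Hodd Hf HA)) E.
Qed.

Lemma Phi_tau_notAut p : p.2 \in Aut [set: gT] -> Phi p * tau gT \notin LM_Aut gT.
Proof.
move=> Hp; apply/negP => /autP H.
have [m Hm] := nontriv Hexp.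
have := H (kl ord0, 1) (1, m).
rewrite LM_mulE eqxx mulg1 mul1g !permM !PhiE /= kap1 aut_1 // !tauE kap_eq1.
rewrite (negbTE (kl_neq1 _)) eqxx invg1 LM_mulE eqxx mul1g => /(congr1 snd) /= E.
apply: (negP Hm); apply/eqP; apply: (@perm_inj _ p.2); rewrite aut_1 //.
by apply: (inv_self Hodd).
Qed.

Lemma noPhiTau p q : p.2 \in Aut [set: gT] -> Phi p <> Phi q * tau gT.
Proof.
move=> Hp E.
have [m Hm] := nontriv Hexp.
have E1 := congr1 (fun g : {perm _} => (g (1, m)).2) E.
have E2 := congr1 (fun g : {perm _} => (g (kl ord0, m)).2) E.
move: E1 E2; rewrite /= permM !PhiE tauE permM !PhiE tauE kap_eq1 kap1 eqxx.
rewrite (negbTE (kl_neq1 _)) /= => E1; rewrite -E1 => E2.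
apply: (negP Hm); apply/eqP; apply: (@perm_inj _ p.2); rewrite aut_1 //.
by apply: (inv_self Hodd); rewrite -E2.
Qed.

Definition D1 := setX [set: 'S_3] (Aut [set: gT]).

Lemma Phi_morphM : {in D1 &, {morph (@Phi gT) : x y / x * y}}.
Proof. by move=> p q _ _; rewrite Phi_morph. Qed.

Definition PhiM : {morphism D1 >-> {perm (Klein * gT)}} := @Morphism _ _ D1 (@Phi gT) Phi_morphM.

Lemma PhiM_inj : 'injm PhiM.
Proof. by apply/injmP => p q _ _ /Phi_injective. Qed.

Lemma img1 : LM_Aut gT = PhiM @* D1.
Proof.
rewrite morphimEdom; apply/setP => f; apply/idP/imsetP.
- move=> Hf; have [[p1 p2] [Hp [E|E]]] := Char_main (aut_half Hf).
    by exists (p1, p2) => //; rewrite /D1 in_setX in_setT.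
  by move: Hf; rewrite E (negbTE (Phi_tau_notAut Hp)).
- case=> [[p1 p2]]; rewrite /D1 in_setX in_setT /= => Hp ->; exact: Phi_aut.
Qed.

Definition Psi (u : 'Z_2 * ({perm 'I_3} * {perm gT})) : {perm (Klein * gT)} :=
  if u.1 == 1 then Phi u.2 else Phi u.2 * tau gT.

Definition D2 := setX [set: 'Z_2] D1.

Lemma z2_11 : (Zp1 * Zp1 : 'Z_2) = 1.
Proof. by apply/eqP. Qed.
Lemma z2_1n : (Zp1 : 'Z_2) == 1 = false.
Proof. by []. Qed.

Lemma Psi_morphM : {in D2 &, {morph Psi : x y / x * y}}.
Proof.
move=> [z1 [p1 p2]] [z2 [q1 q2]]; rewrite /D2 /D1 !in_setX !in_setT /= => Hp Hq.
rewrite /Psi /=.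
case: (z2_cases z1) => ->; case: (z2_cases z2) => ->;
  rewrite ?mul1g ?mulg1 ?z2_11 ?eqxx ?z2_1n Phi_morph //.
- by rewrite mulgA.
- by rewrite -!mulgA (@tauPhi gT (q1, q2) Hq).
- by rewrite -mulgA (mulgA (tau gT)) -(@tauPhi gT (q1, q2) Hq) -!mulgA tau2 mulg1.
Qed.

Definition PsiM : {morphism D2 >-> {perm (Klein * gT)}} := @Morphism _ _ D2 Psi Psi_morphM.

Lemma PsiM_inj : 'injm PsiM.
Proof.
apply/injmP => [[z1 [p1 p2]] [z2 [q1 q2]]]; rewrite /D2 /D1 !in_setX !in_setT /= => Hp Hq.
rewrite /Psi /=.
case: (z2_cases z1) => ->; case: (z2_cases z2) => ->; rewrite ?eqxx ?z2_1n.
- by move/Phi_injective ->.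
- by move/(@noPhiTau (p1, p2) (q1, q2) Hp).
- by move/esym/(@noPhiTau (q1, q2) (p1, p2) Hq).
- by move/mulIg/Phi_injective ->.
Qed.

Lemma tau_half : tau gT \in LM_Half gT.
Proof.
apply: halfI => [[A x] [B y]].
case: (eqVneq A 1) => [->|HA]; case: (eqVneq B 1) => [->|HB].
- do 3 rewrite ?LM_mulE ?tauE ?eqxx ?mulg1 ?mul1g; by left.
- do 3 rewrite ?LM_mulE ?tauE ?eqxx ?(negbTE HB) ?mulg1 ?mul1g.
  by right; rewrite invMg invgK.
- do 3 rewrite ?LM_mulE ?tauE ?eqxx ?(negbTE HA) ?mulg1 ?mul1g.
  by right; rewrite invMg.
case: (eqVneq A B) => [<-|HAB].
  do 3 rewrite ?LM_mulE ?tauE ?eqxx ?(negbTE HA) ?klein_sq.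
  by right; rewrite !invgK (mC Hab y).
have HC : A * B != 1 by apply: contra HAB; rewrite -eq_invg_mul klein_inv.
do 3 rewrite ?LM_mulE ?tauE ?(negbTE HA) ?(negbTE HB) ?(negbTE HC).
by left; rewrite invMg !invgK (mC Hab x).
Qed.

Lemma img2 : LM_Half gT = PsiM @* D2.
Proof.
rewrite morphimEdom; apply/setP => f; apply/idP/imsetP.
- move=> Hf; have [[p1 p2] [Hp [E|E]]] := Char_main Hf.
    exists (1, (p1, p2)); first by rewrite /D2 /D1 !in_setX !in_setT Hp.
    by rewrite /= /Psi /= ?eqxx.
  exists (Zp1, (p1, p2)); first by rewrite /D2 /D1 !in_setX !in_setT Hp.
  by rewrite /= /Psi /= ?z2_1n.
- case=> [[z [p1 p2]]]; rewrite /D2 /D1 !in_setX !in_setT /= => Hp ->.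
  have H1 := aut_half (@Phi_aut gT (p1, p2) Hp).
  rewrite /= /Psi /=; case: ifP => _; first exact: H1.
  by apply: half_mul; [exact: H1 | exact: tau_half].
Qed.

End Main.

Theorem theorem5p6 (gT : finGroupType) :
  abelian [set: gT] -> odd #|[set: gT]| -> 2 < exponent [set: gT] ->
  (LM_Aut gT \isog setX [set: 'S_3] (Aut [set: gT])) /\
  (LM_Half gT \isog setX [set: 'Z_2] (setX [set: 'S_3] (Aut [set: gT]))).
Proof.
move=> Hab Hodd Hexp; split.
- have H := sub_isog (subxx (D1 gT)) (PhiM_inj gT).
  rewrite (img1 Hab Hodd Hexp); exact: (isog_symr H).
- have H := sub_isog (subxx (D2 gT)) (PsiM_inj Hodd Hexp).
  rewrite (img2 Hab Hodd Hexp); exact: (isog_symr H).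
Qed.
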